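(* Let $\sum_{n=1}^{\infty}x_n$ be a divergent series of positive real terms with $\lim_{n\to\infty}x_n=0$, and let $S=\{\sum_{n=1}^{\infty}(x_n-x_{\sigma(n)}) : \sigma\in S_\infty,\ \text{the series converges}\}$. If $b\in S$, then $[b,\infty)\subseteq S$.
   Context: $S_\infty$ denotes the set of all permutations of $\mathbb{N}$. *)

(* Defs.v *)
(* classical reals. Sequences are indexed from 0 (x 0 is x_1). *)
From Stdlib Require Import Reals.
Open Scope R_scope.

Definition is_perm (sigma : nat -> nat) : Prop :=
  (forall m n, sigma m = sigma n -> m = n) /\ (forall k, exists n, sigma n = k).

Definition rearr_diff_sums (x : nat -> R) (b : R) : Prop :=
  exists sigma : nat -> nat, is_perm sigma /\
    infinite_sum (fun n => x n - x (sigma n)) b.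

(* Main.v *)
Require Import Defs.
From Stdlib Require Import Reals Lra Lia List Classical ClassicalEpsilon.
Import ListNotations.
Open Scope R_scope.

Definition PS (y : nat -> R) (k : nat) : R := sum_f_R0 y k.

Definition fill (y : nat -> R) (d : R) (L n : nat) : nat :=
  epsilon (inhabits 0%nat) (fun j => (L < j)%nat /\ (n < j)%nat /\
     d + 1 <= PS y (pred j) - PS y L /\ y j <= (/2)^n).

Definition lastj (l : list (nat*nat)) : nat :=
  match l with nil => 0%nat | p :: _ => snd p end.

Fixpoint lsum (b : nat*nat -> bool) (f : nat*nat -> R) (l : list (nat*nat)) : R :=
  match l with nil => 0 | p :: t => (if b p then f p else 0) + lsum b f t end.

Definition isf (n : nat) (l : list (nat*nat)) : bool :=
  existsb (fun p => Nat.eqb (snd p) n) l.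

Definition hv (y : nat -> R) (n : nat) (l : list (nat*nat)) : R :=
  lsum (fun p => Nat.ltb n (snd p)) (fun p => y (fst p)) l.

Fixpoint st (y : nat -> R) (d : R) (n : nat) : list (nat*nat) :=
  match n with
  | O => nil
  | S m => let l := st y d m in
     if isf m l then l else
     if Rlt_dec (hv y m l) d then (m, fill y d (lastj l) m) :: l else l
  end.

Fixpoint lk (n : nat) (l : list (nat*nat)) : nat :=
  match l with
  | nil => n
  | (i,j) :: t => if Nat.eqb i n then j else if Nat.eqb j n then i else lk n t
  end.

Definition rho y d n := lk n (st y d (S n)).

Fixpoint chain (l : list (nat*nat)) : Prop :=
  match l with
  | nil => True
  | (i,j) :: t => (i < j)%nat /\
      (forall p, In p t -> (fst p < i)%nat /\ (snd p < j)%nat /\ snd p <> i) /\ chain t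
  end.

Fixpoint gapok (y : nat -> R) (d : R) (l : list (nat*nat)) : Prop :=
  match l with
  | nil => True
  | (i,j) :: t => d + 1 <= PS y (pred j) - PS y (lastj t) /\ y j <= (/2)^i /\ gapok y d t
  end.

Lemma PS_mono (y : nat -> R) (hy : forall n, 0 < y n) a b :
  (a <= b)%nat -> PS y a <= PS y b.
Proof.
  induction 1; [lra|]. unfold PS in *. simpl. specialize (hy (S m)). lra.
Qed.

Lemma fill_spec (y : nat -> R) (d : R) (hy : forall n, 0 < y n)
  (hunb : forall B, exists k, B < PS y k) (hlim : Un_cv y 0) (L n : nat) :
  let j := fill y d L n in
  (L < j)%nat /\ (n < j)%nat /\ d + 1 <= PS y (pred j) - PS y L /\ y j <= (/2)^n.
Proof.
  unfold fill. apply epsilon_spec.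
  destruct (hunb (PS y L + d + 1)) as [k hk].
  assert (hp : (/2)^n > 0) by (apply pow_lt; lra).
  destruct (hlim _ hp) as [K hK].
  exists (S (Nat.max (Nat.max k K) (Nat.max L n))).
  split; [lia|]. split; [lia|]. split.
  - simpl. assert (PS y k <= PS y (Nat.max (Nat.max k K) (Nat.max L n))).
    { apply PS_mono; auto; lia. } lra.
  - assert (h := hK (S (Nat.max (Nat.max k K) (Nat.max L n))) ltac:(lia)).
    unfold Rdist in h. rewrite Rminus_0_r in h. apply Rabs_def2 in h. lra.
Qed.

Lemma lastj_max l p : chain l -> In p l -> (snd p <= lastj l)%nat.
Proof.
  destruct l as [|[i j] t]; simpl; [tauto|].
  intros [h1 [h2 h3]] [<-|hin]; simpl; [lia|].
  destruct (h2 p hin) as [_ [? _]]. lia.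
Qed.

Lemma isf_false n l : isf n l = false -> forall p, In p l -> snd p <> n.
Proof.
  unfold isf. intros h p hin e. 
  assert (existsb (fun p => Nat.eqb (snd p) n) l = true).
  { apply existsb_exists. exists p. split; auto. apply Nat.eqb_eq; auto. }
  congruence.
Qed.

Lemma isf_true n l : isf n l = true -> exists i, In (i, n) l.
Proof.
  unfold isf. intros h. apply existsb_exists in h. destruct h as [[i j] [hin he]].
  apply Nat.eqb_eq in he. simpl in he. subst. eauto.
Qed.

Lemma st_inv y d (hy : forall n, 0 < y n)
  (hunb : forall B, exists k, B < PS y k) (hlim : Un_cv y 0) N :
  chain (st y d N) /\ gapok y d (st y d N) /\
  (forall p, In p (st y d N) -> (fst p < N)%nat).
Proof.
  induction N as [|N [IH1 [IH2 IH3]]]; simpl.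
  - tauto.
  - destruct (isf N (st y d N)) eqn:hf.
    + split; auto. split; auto. intros p hp. specialize (IH3 p hp). lia.
    + destruct (Rlt_dec (hv y N (st y d N)) d).
      * destruct (fill_spec y d hy hunb hlim (lastj (st y d N)) N) as [f1 [f2 [f3 f4]]].
        simpl. split; [split; [lia| split; auto]|].
        { intros p hp. split; [apply IH3; auto|]. split.
          - pose proof (lastj_max _ _ IH1 hp). lia.
          - apply (isf_false _ _ hf); auto. }
        split; [split; auto|].
        intros p [<-|hp]; simpl; [lia|]. specialize (IH3 p hp); lia.
      * split; auto. split; auto. intros p hp. specialize (IH3 p hp). lia.
Qed.

Lemma st_prefix y d N M : (N <= M)%nat ->
  exists pre, st y d M = pre ++ st y d N /\ (forall p, In p pre -> (N <= fst p)%nat).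
Proof.
  induction 1.
  - exists nil. simpl. tauto.
  - destruct IHle as [pre [e h]]. simpl.
    destruct (isf m (st y d m)).
    + exists pre; auto.
    + destruct (Rlt_dec _ _).
      * exists ((m, fill y d (lastj (st y d m)) m) :: pre). rewrite e. split; auto.
        intros p [<-|hp]; simpl; auto.
      * exists pre; auto.
Qed.

Lemma lk_app n pre l : (forall p, In p pre -> fst p <> n /\ snd p <> n) ->
  lk n (pre ++ l) = lk n l.
Proof.
  induction pre as [|[i j] t IH]; simpl; auto.
  intros h. destruct (h (i,j) (or_introl eq_refl)) as [h1 h2]; simpl in *.
  rewrite (proj2 (Nat.eqb_neq i n) h1), (proj2 (Nat.eqb_neq j n) h2).
  apply IH. auto.
Qed.

Lemma chain_lt l p : chain l -> In p l -> (fst p < snd p)%nat.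
Proof.
  induction l as [|[i j] t IH]; simpl; [tauto|].
  intros [h1 [h2 h3]] [<-|hp]; simpl; auto.
Qed.

Lemma lk_in l a b : chain l -> In (a,b) l -> lk a l = b /\ lk b l = a.
Proof.
  induction l as [|[i j] t IH]; simpl; [tauto|].
  intros [h1 [h2 h3]] [e|hp].
  - inversion e; subst. rewrite Nat.eqb_refl.
    rewrite (proj2 (Nat.eqb_neq a b) ltac:(lia)). rewrite Nat.eqb_refl. auto.
  - destruct (h2 _ hp) as [k1 [k2 k3]]. simpl in *.
    assert (a < b)%nat by (apply (chain_lt t (a,b)); auto).
    rewrite (proj2 (Nat.eqb_neq i a) ltac:(lia)), (proj2 (Nat.eqb_neq j a) ltac:(lia)).
    rewrite (proj2 (Nat.eqb_neq i b) ltac:(lia)), (proj2 (Nat.eqb_neq j b) ltac:(lia)).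
    apply IH; auto.
Qed.

Lemma lk_cases n l : lk n l = n \/ In (n, lk n l) l \/ In (lk n l, n) l.
Proof.
  induction l as [|[i j] t IH]; simpl; auto.
  destruct (Nat.eqb_spec i n); subst; auto.
  destruct (Nat.eqb_spec j n); subst; auto.
  destruct IH as [h|[h|h]]; auto.
Qed.

Lemma rho_stable y d (inv : forall N, chain (st y d N)) n N : (n < N)%nat ->
  rho y d n = lk n (st y d N).
Proof.
  intros h. unfold rho. destruct (st_prefix y d (S n) N ltac:(lia)) as [pre [e hp]].
  rewrite e. rewrite lk_app; auto.
  intros p hin. assert (In p (st y d N)) by (rewrite e; apply in_or_app; auto).
  pose proof (chain_lt _ _ (inv N) H). specialize (hp p hin). lia.
Qed.

Lemma rho_inv y d (inv : forall N, chain (st y d N)) n : rho y d (rho y d n) = n.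
Proof.
  set (M := S (Nat.max n (rho y d n))).
  rewrite (rho_stable y d inv (rho y d n) M) by (unfold M; lia).
  rewrite (rho_stable y d inv n M) by (unfold M; lia).
  destruct (lk_cases n (st y d M)) as [h|[h|h]].
  - rewrite h. exact h.
  - apply (lk_in _ _ _ (inv M) h).
  - apply (lk_in _ _ _ (inv M) h).
Qed.

Lemma lsum_ext b1 b2 f l : (forall p, In p l -> b1 p = b2 p) -> lsum b1 f l = lsum b2 f l.
Proof.
  induction l as [|p t IH]; simpl; auto. intros h.
  rewrite (h p (or_introl eq_refl)). rewrite IH; auto.
Qed.

Lemma lsum_nof N f l : (forall p, In p l -> snd p <> S N) ->
  lsum (fun p => Nat.ltb N (snd p)) f l = lsum (fun p => Nat.ltb (S N) (snd p)) f l.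
Proof.
  intros h. apply lsum_ext. intros p hp. specialize (h p hp).
  destruct (Nat.ltb_spec N (snd p)), (Nat.ltb_spec (S N) (snd p)); auto; lia.
Qed.

Lemma lsum_split N f l i : chain l -> In (i, S N) l ->
  lsum (fun p => Nat.ltb N (snd p)) f l = f (i, S N) + lsum (fun p => Nat.ltb (S N) (snd p)) f l.
Proof.
  induction l as [|[a b] t IH]; simpl; [tauto|].
  intros [h1 [h2 h3]] [e|hp].
  - inversion e; subst. rewrite Nat.ltb_irrefl.
    rewrite (proj2 (Nat.ltb_lt N (S N)) ltac:(lia)).
    rewrite (lsum_nof N f t); [lra|].
    intros p hp. destruct (h2 p hp) as [_ [k _]]. lia.
  - destruct (h2 _ hp) as [_ [k _]]. simpl in k.
    rewrite (proj2 (Nat.ltb_lt N b) ltac:(lia)), (proj2 (Nat.ltb_lt (S N) b) ltac:(lia)).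
    rewrite (IH h3 hp). lra.
Qed.

Definition Aq y d N := lsum (fun p => Nat.ltb N (snd p)) (fun p => y (fst p) - y (snd p)) (st y d (S N)).

Lemma lk_notin n l : (forall p, In p l -> fst p <> n /\ snd p <> n) -> lk n l = n.
Proof. intros h. rewrite <- (app_nil_r l). rewrite lk_app; auto. Qed.

Lemma sum_formula y d
  (inv : forall N, chain (st y d N) /\ (forall p, In p (st y d N) -> (fst p < N)%nat)) N :
  sum_f_R0 (fun n => y n - y (rho y d n)) N = Aq y d N.
Proof.
  induction N as [|N IH].
  - simpl. unfold Aq, rho. destruct (inv 1%nat) as [c _]. revert c. simpl.
    destruct (Rlt_dec (hv y 0 []) d); simpl.
    + intros [h _]. rewrite (proj2 (Nat.ltb_lt 0 _) h). lra.
    + intros _. lra.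
  - simpl. rewrite IH. unfold Aq, rho.
    set (l := st y d (S N)).
    assert (E : st y d (S (S N)) = if isf (S N) l then l else
       if Rlt_dec (hv y (S N) l) d then (S N, fill y d (lastj l) (S N)) :: l else l) by reflexivity.
    destruct (inv (S (S N))) as [c2 _]. rewrite E in c2 |- *.
    destruct (inv (S N)) as [c1 f1]. fold l in c1, f1.
    destruct (isf (S N) l) eqn:hf.
    + destruct (isf_true _ _ hf) as [i hi].
      rewrite (lsum_split N _ l i c1 hi). simpl.
      rewrite (proj2 (lk_in _ _ _ c1 hi)). lra.
    + assert (nf := isf_false _ _ hf).
      destruct (Rlt_dec _ _).
      * simpl. rewrite Nat.eqb_refl. simpl in c2. destruct c2 as [k _].
        rewrite (proj2 (Nat.ltb_lt (S N) _) k). rewrite (lsum_nof N _ l nf). lra.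
      * rewrite lk_notin.
        -- rewrite (lsum_nof N _ l nf). lra.
        -- intros p hp. split; [specialize (f1 p hp); lia| apply nf; auto].
Qed.

Definition hh y d N := hv y N (st y d N).
Definition Hq y d N := hv y N (st y d (S N)).

Lemma lsum_nonneg b f l : (forall p, 0 <= f p) -> 0 <= lsum b f l.
Proof.
  intros h. induction l as [|p t IH]; simpl; [lra|].
  destruct (b p); specialize (h p); lra.
Qed.

Lemma in_st_mono y d p N M : (N <= M)%nat -> In p (st y d N) -> In p (st y d M).
Proof.
  intros h hp. destruct (st_prefix y d N M h) as [pre [e _]]. rewrite e. apply in_or_app; auto.
Qed.

Lemma in_st_early y d p N M : In p (st y d M) -> (fst p < N)%nat -> In p (st y d N).
Proof.
  intros hp hf. destruct (Nat.le_gt_cases N M).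
  - destruct (st_prefix y d N M H) as [pre [e hpre]]. rewrite e in hp.
    apply in_app_or in hp. destruct hp as [hp|hp]; auto. specialize (hpre p hp). lia.
  - apply (in_st_mono y d p M N); auto. lia.
Qed.

Lemma chain_app_r pre l : chain (pre ++ l) -> chain l.
Proof.
  induction pre as [|[a b] t IH]; simpl; auto. intros [_ [_ h]]; auto.
Qed.

Lemma gapok_app_r y d pre l : gapok y d (pre ++ l) -> gapok y d l.
Proof.
  induction pre as [|[a b] t IH]; simpl; auto. intros [_ [_ h]]; auto.
Qed.

Lemma chain_pre pre q t p : chain (pre ++ q :: t) -> In p pre -> (snd q < snd p)%nat.
Proof.
  induction pre as [|[a b] r IH]; simpl; [tauto|].
  intros [h1 [h2 h3]] [<-|hp]; simpl.
  - apply (h2 q). apply in_or_app. simpl; auto.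
  - apply IH; auto.
Qed.


Lemma HH y d (hy : forall n, 0 < y n)
  (hunb : forall B, exists k, B < PS y k) (hlim : Un_cv y 0) N :
  (isf N (st y d N) = false /\ hh y d N < d /\ Hq y d N = y N + hh y d N) \/
  ((isf N (st y d N) = true \/ d <= hh y d N) /\ Hq y d N = hh y d N).
Proof.
  unfold Hq, hh. simpl. destruct (isf N (st y d N)) eqn:hf.
  - right; auto.
  - destruct (Rlt_dec _ _).
    + left. split; auto. split; auto. unfold hv at 1. simpl.
      destruct (fill_spec y d hy hunb hlim (lastj (st y d N)) N) as [_ [f2 _]].
      rewrite (proj2 (Nat.ltb_lt N _) f2). reflexivity.
    + right. split; [right; lra|auto].
Qed.

Lemma hh_nonneg y d (hy : forall n, 0 < y n) N : 0 <= hh y d N.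
Proof. apply lsum_nonneg. intros p. left; apply hy. Qed.

Lemma Hq_nonneg y d (hy : forall n, 0 < y n) N : 0 <= Hq y d N.
Proof. apply lsum_nonneg. intros p. left; apply hy. Qed.

Lemma Hq_ge y d (hy : forall n, 0 < y n)
  (hunb : forall B, exists k, B < PS y k) (hlim : Un_cv y 0) N :
  hh y d N <= Hq y d N /\
  (isf N (st y d N) = false -> Rmin (hh y d N + y N) d <= Hq y d N).
Proof.
  destruct (HH y d hy hunb hlim N) as [[h1 [h2 h3]]|[[h1|h1] h2]]; rewrite ?h3, ?h2.
  - split; [specialize (hy N); lra|]. intros _. rewrite Rplus_comm. apply Rmin_l.
  - split; [lra|]. congruence.
  - split; [lra|]. intros _. apply Rle_trans with d; auto. apply Rmin_r.
Qed.

Lemma R4a y d (inv : forall N, chain (st y d N)) N :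
  isf (S N) (st y d (S N)) = false -> hh y d (S N) = Hq y d N.
Proof.
  intros hf. unfold hh, Hq, hv. symmetry. apply lsum_nof. apply isf_false; auto.
Qed.

Lemma R4b y d (inv : forall N, chain (st y d N)) N i :
  In (i, S N) (st y d (S N)) -> Hq y d N = y i + hh y d (S N).
Proof.
  intros hi. unfold hh, Hq, hv. rewrite (lsum_split N _ _ i (inv (S N)) hi). reflexivity.
Qed.

Lemma seg y d (hy : forall n, 0 < y n)
  (hunb : forall B, exists k, B < PS y k) (hlim : Un_cv y 0)
  (inv : forall N, chain (st y d N)) a k :
  (forall m, (a < m <= a + 1 + k)%nat -> isf m (st y d m) = false) ->
  Rmin (hh y d a + (PS y (a + k) - PS y a)) d <= hh y d (a + 1 + k).
Proof.
  induction k as [|k IH]; intros hf.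
  - replace (a + 1 + 0)%nat with (S a) by lia.
    rewrite (R4a y d inv a (hf (S a) ltac:(lia))).
    destruct (Hq_ge y d hy hunb hlim a) as [g _].
    rewrite Nat.add_0_r. apply Rle_trans with (hh y d a); [|auto].
    replace (hh y d a + (PS y a - PS y a)) with (hh y d a) by ring. apply Rmin_l.
  - replace (a + 1 + S k)%nat with (S (a + 1 + k)) by lia.
    rewrite (R4a y d inv _ (hf (S (a + 1 + k)) ltac:(lia))).
    destruct (Hq_ge y d hy hunb hlim (a + 1 + k)) as [_ g].
    specialize (g (hf (a + 1 + k)%nat ltac:(lia))).
    assert (IH' := IH (fun m hm => hf m ltac:(lia))).
    replace (PS y (a + S k)) with (PS y (a + k) + y (a + 1 + k)%nat)
      by (unfold PS; replace (a + S k)%nat with (S (a + k)) by lia; simpl;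
          replace (a + 1 + k)%nat with (S (a+k)) by lia; reflexivity).
    apply Rle_trans with (2 := g).
    unfold Rmin in *. specialize (hy (a + 1 + k)%nat).
    repeat match goal with
      | |- context [Rle_dec ?a ?b] => destruct (Rle_dec a b)
      | H : context [Rle_dec ?a ?b] |- _ => destruct (Rle_dec a b) end; lra.
Qed.

Lemma Lf y d (hy : forall n, 0 < y n)
  (hunb : forall B, exists k, B < PS y k) (hlim : Un_cv y 0) (hd : 0 <= d)
  M pre i j t : st y d M = pre ++ (i,j) :: t -> d - y i <= hh y d j.
Proof.
  intros e.
  assert (inv : forall N, chain (st y d N)) by (intros N; apply (st_inv y d hy hunb hlim N)).
  assert (gM := proj1 (proj2 (st_inv y d hy hunb hlim M))). rewrite e in gM.
  apply gapok_app_r in gM. destruct gM as [gap _].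
  assert (cM := inv M). rewrite e in cM.
  assert (ct := chain_app_r _ _ cM). destruct ct as [hij [_ ct]].
  set (L := lastj t) in *.
  assert (hL : (L < pred j)%nat).
  { destruct (Nat.le_gt_cases (pred j) L) as [h|h]; auto.
    pose proof (PS_mono y hy _ _ h). lra. }
  set (k := (j - L - 2)%nat).
  assert (ej : j = (L + 2 + k)%nat) by (unfold k; lia).
  assert (nf : forall m, (L < m < j)%nat -> isf m (st y d m) = false).
  { intros m hm. destruct (isf m (st y d m)) eqn:hf; auto. exfalso.
    destruct (isf_true _ _ hf) as [i' hi'].
    set (M' := Nat.max M m).
    assert (h1 : In (i', m) (st y d M')) by (apply (in_st_mono y d _ m); auto; unfold M'; lia).
    destruct (st_prefix y d M M' ltac:(unfold M'; lia)) as [pre' [e' _]].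
    rewrite e', e, app_assoc in h1.
    assert (cM' := inv M'). rewrite e', e, app_assoc in cM'.
    apply in_app_or in h1. destruct h1 as [h1|[h1|h1]].
    - pose proof (chain_pre _ _ _ _ cM' h1). simpl in *. lia.
    - inversion h1; lia.
    - pose proof (lastj_max _ _ ct h1). simpl in *. fold L in H. lia. }
  assert (sg := seg y d hy hunb hlim inv L k (fun m hm => nf m ltac:(lia))).
  assert (nfN : isf (L + 1 + k) (st y d (L + 1 + k)) = false) by (apply nf; lia).
  destruct (Hq_ge y d hy hunb hlim (L + 1 + k)) as [_ g]. specialize (g nfN).
  assert (inj : In (i, S (L + 1 + k)) (st y d (S (L + 1 + k)))).
  { apply (in_st_early y d _ _ M); [|simpl; lia].
    rewrite e. apply in_or_app. right. replace (S (L + 1 + k)) with j by lia. left; auto. }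
  rewrite (R4b y d inv _ i inj) in g.
  replace (S (L + 1 + k)) with j in g by lia.
  assert (eP : PS y (pred j) = PS y (L + k) + y (L + 1 + k)%nat).
  { rewrite ej. unfold PS. replace (pred (L + 2 + k)) with (S (L + k)) by lia. simpl.
    replace (L + 1 + k)%nat with (S (L + k)) by lia. reflexivity. }
  assert (h0 := hh_nonneg y d hy L).
  assert (d <= y i + hh y d j); [|lra].
  apply Rle_trans with (2 := g).
  unfold Rmin in *. pose proof (hy (L + 1 + k)%nat).
  repeat match goal with
    | |- context [Rle_dec ?a ?b] => destruct (Rle_dec a b)
    | H : context [Rle_dec ?a ?b] |- _ => destruct (Rle_dec a b) end; lra.
Qed.

Lemma lsum_le (b1 b2 : nat*nat -> bool) (f1 f2 : nat*nat -> R) l :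
  (forall p, In p l -> (if b1 p then f1 p else 0) <= (if b2 p then f2 p else 0)) ->
  lsum b1 f1 l <= lsum b2 f2 l.
Proof.
  induction l as [|p t IH]; simpl; [lra|]. intros h.
  pose proof (h p (or_introl eq_refl)). pose proof (IH (fun q hq => h q (or_intror hq))). lra.
Qed.

Lemma lsum_minus (b : nat*nat -> bool) (f g : nat*nat -> R) l : lsum b (fun p => f p - g p) l = lsum b f l - lsum b g l.
Proof.
  induction l as [|p t IH]; simpl; [lra|]. rewrite IH. destruct (b p); lra.
Qed.

Lemma lsum_zero (b : nat*nat -> bool) (f : nat*nat -> R) l : (forall p, In p l -> b p = false) -> lsum b f l = 0.
Proof.
  induction l as [|p t IH]; simpl; [lra|]. intros h. rewrite (h p (or_introl eq_refl)).
  rewrite IH; auto. lra.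
Qed.

Lemma gapok_in y d l i j : gapok y d l -> In (i,j) l -> y j <= (/2)^i.
Proof.
  induction l as [|[a b] t IH]; simpl; [tauto|].
  intros [_ [h1 h2]] [e|hp]; [inversion e; subst; auto| auto].
Qed.

Lemma hp_anti m n : (m <= n)%nat -> (/2)^n <= (/2)^m.
Proof.
  induction 1; [lra|]. simpl. assert (0 < (/2)^m0) by (apply pow_lt; lra). lra.
Qed.

Lemma geo K l : chain l -> forall M, (forall p, In p l -> (fst p < M)%nat) -> (K <= M)%nat ->
  lsum (fun p => Nat.leb K (fst p)) (fun p => (/2)^(fst p)) l <= 2 * (/2)^K - 2 * (/2)^M.
Proof.
  induction l as [|[i j] t IH]; simpl; intros c M hM hK.
  - assert ((/2)^M <= (/2)^K) by (apply hp_anti; lia). lra.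
  - destruct c as [c1 [c2 c3]].
    assert (hi : (i < M)%nat) by (apply (hM (i,j)); auto).
    destruct (Nat.leb_spec K i).
    + assert (IH' := IH c3 i (fun p hp => proj1 (c2 p hp)) H).
      assert ((/2)^M <= (/2)^(S i)) by (apply hp_anti; lia).
      simpl in H0. lra.
    + assert (IH' := IH c3 K (fun p hp => Nat.lt_trans _ _ _ (proj1 (c2 p hp)) H) (le_n K)).
      assert ((/2)^M <= (/2)^K) by (apply hp_anti; lia). lra.
Qed.

Lemma KT y d (inv : forall N, chain (st y d N)) X M i j :
  In (i,j) (st y d M) -> (S (Nat.max X (lastj (st y d X))) <= j)%nat -> (X <= i)%nat.
Proof.
  intros hin hj. destruct (Nat.le_gt_cases X i); auto.
  assert (h := in_st_early y d _ X M hin H).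
  pose proof (lastj_max _ _ (inv X) h). simpl in *. lia.
Qed.

Lemma st_S y d N : st y d (S N) = (let l := st y d N in
     if isf N l then l else
     if Rlt_dec (hv y N l) d then (N, fill y d (lastj l) N) :: l else l).
Proof. reflexivity. Qed.

Lemma main_lemma y d (hy : forall n, 0 < y n)
  (hunb : forall B, exists k, B < PS y k) (hlim : Un_cv y 0) (hd : 0 <= d) :
  infinite_sum (fun n => y n - y (rho y d n)) d.
Proof.
  assert (inv : forall N, chain (st y d N)) by (intros N; apply (st_inv y d hy hunb hlim N)).
  assert (invf : forall N, chain (st y d N) /\ (forall p, In p (st y d N) -> (fst p < N)%nat))
    by (intros N; pose proof (st_inv y d hy hunb hlim N); tauto).
  assert (invg : forall N, gapok y d (st y d N)) by (intros N; apply (st_inv y d hy hunb hlim N)).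
  intros eps heps. set (e := eps / 3).
  assert (he : 0 < e) by (unfold e; lra).
  destruct (hlim e he) as [N0 hN0].
  assert (ysm : forall m, (N0 <= m)%nat -> y m < e).
  { intros m hm. specialize (hN0 m hm). unfold Rdist in hN0. rewrite Rminus_0_r in hN0.
    apply Rabs_def2 in hN0. lra. }
  set (T := S (Nat.max N0 (lastj (st y d N0)))).
  assert (kt : forall M i j, In (i,j) (st y d M) -> (T <= j)%nat -> (N0 <= i)%nat)
    by (intros; eapply KT; eauto).
  assert (low : exists B, (T <= B)%nat /\ forall N, (B <= N)%nat -> d - e <= hh y d N).
  { assert (base : exists B, (T <= B)%nat /\ d - e <= hh y d B).
    { destruct (classic (exists M i j, In (i,j) (st y d M) /\ (T <= j)%nat)) as
        [[M [i [j [hin hj]]]]|hno].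
      - exists j. split; auto. destruct (in_split _ _ hin) as [pre [t e1]].
        pose proof (Lf y d hy hunb hlim hd M pre i j t e1).
        pose proof (ysm i (kt M i j hin hj)). lra.
      - exists T. split; auto.
        destruct (Rlt_dec (hh y d T) d) as [hl|hl]; [|lra]. exfalso. apply hno.
        destruct (isf T (st y d T)) eqn:hf.
        + destruct (isf_true _ _ hf) as [i hi]. exists T, i, T. auto.
        + exists (S T), T, (fill y d (lastj (st y d T)) T).
          destruct (fill_spec y d hy hunb hlim (lastj (st y d T)) T) as [_ [f2 _]].
          split; [|lia]. rewrite st_S. cbv zeta. rewrite hf. unfold hh in hl.
          destruct (Rlt_dec _ _); [left; auto|lra]. }
    destruct base as [B [hB hb]]. exists B. split; auto.
    intros N hN. replace N with (B + (N - B))%nat by lia. generalize (N - B)%nat as n.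
    induction n as [|n IH]; [rewrite Nat.add_0_r; auto|].
    replace (B + S n)%nat with (S (B + n)) by lia.
    destruct (isf (S (B + n)) (st y d (S (B + n)))) eqn:hf.
    - destruct (isf_true _ _ hf) as [i hi]. destruct (in_split _ _ hi) as [pre [t e1]].
      pose proof (Lf y d hy hunb hlim hd _ pre i _ t e1).
      pose proof (ysm i (kt _ i _ hi ltac:(lia))). lra.
    - rewrite (R4a y d inv _ hf). destruct (Hq_ge y d hy hunb hlim (B + n)) as [g _]. lra. }
  destruct low as [B [hBT low]].
  set (hn := fun N => lsum (fun p => andb (Nat.ltb N (snd p)) (Nat.leb N0 (fst p)))
                            (fun p => y (fst p)) (st y d N)).
  assert (hn_le : forall N, hn N <= hh y d N).
  { intros N. unfold hn, hh, hv. apply lsum_le. intros p _.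
    destruct (Nat.ltb N (snd p)); simpl; [destruct (Nat.leb N0 (fst p)); [lra|left; apply hy]|lra]. }
  assert (hn_up : forall n, hn (N0 + n)%nat <= d + e).
  { induction n as [|n IH].
    - unfold hn. rewrite lsum_zero; [lra|]. intros p hp.
      rewrite Nat.add_0_r in hp. pose proof (proj2 (invf N0) p hp).
      destruct (Nat.leb_spec N0 (fst p)); [lia|]. apply Bool.andb_false_r.
    - replace (N0 + S n)%nat with (S (N0 + n)) by lia.
      set (N := (N0 + n)%nat) in *.
      assert (mono : lsum (fun p => andb (Nat.ltb (S N) (snd p)) (Nat.leb N0 (fst p)))
                       (fun p => y (fst p)) (st y d N) <= hn N).
      { unfold hn. apply lsum_le. intros p _. pose proof (hy (fst p)).
        destruct (Nat.ltb_spec (S N) (snd p)), (Nat.ltb_spec N (snd p)); simpl; try lia;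
        destruct (Nat.leb N0 (fst p)); lra. }
      unfold hn at 1. simpl.
      destruct (isf N (st y d N)) eqn:hf; [exact (Rle_trans _ _ _ mono IH)|].
      destruct (Rlt_dec (hv y N (st y d N)) d) as [hl|hl]; [|exact (Rle_trans _ _ _ mono IH)].
      simpl. pose proof (ysm N ltac:(unfold N; lia)). pose proof (hn_le N). unfold hh in *.
      destruct (andb _ _); lra. }
  assert (upH : forall N, (T <= N)%nat -> Hq y d N <= d + e).
  { intros N hN.
    assert (eq : hh y d N = hn N).
    { unfold hh, hv, hn. apply lsum_ext. intros [i j] hp. simpl.
      destruct (Nat.ltb_spec N j); simpl; auto. symmetry. apply Nat.leb_le.
      apply (kt N i j hp). lia. }
    assert (hup : hh y d N <= d + e).
    { rewrite eq. replace N with (N0 + (N - N0))%nat by (unfold T in hN; lia). apply hn_up. }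
    destruct (HH y d hy hunb hlim N) as [[_ [h2 h3]]|[_ h3]]; rewrite h3; [|auto].
    pose proof (ysm N ltac:(unfold T in hN; lia)). lra. }
  assert (h2 : Rabs (/2) < 1) by (rewrite Rabs_right; lra).
  destruct (pow_lt_1_zero (/2) h2 (e/2) ltac:(lra)) as [K hK].
  specialize (hK K (le_n K)). rewrite Rabs_right in hK by (apply Rle_ge, pow_le; lra).
  set (TK := S (Nat.max K (lastj (st y d K)))).
  assert (Fb : forall N, (TK <= N)%nat ->
     lsum (fun p => Nat.ltb N (snd p)) (fun p => y (snd p)) (st y d (S N)) < e).
  { intros N hN.
    apply Rle_lt_trans with (lsum (fun p => Nat.leb K (fst p)) (fun p => (/2)^(fst p)) (st y d (S N))).
    - apply lsum_le. intros [i j] hp. simpl.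
      destruct (Nat.ltb_spec N j).
      + rewrite (proj2 (Nat.leb_le K i) (KT y d inv K _ i j hp ltac:(unfold TK in *; lia))).
        apply (gapok_in y d _ i j (invg _) hp).
      + destruct (Nat.leb K i); [left; apply pow_lt; lra|lra].
    - eapply Rle_lt_trans; [apply (geo K _ (inv (S N)) (S N) (proj2 (invf (S N)))); unfold TK in *; lia|].
      assert (0 < (/2)^(S N)) by (apply pow_lt; lra). lra. }
  exists (Nat.max B TK). intros N hN.
  unfold Rdist. rewrite (sum_formula y d invf N). unfold Aq. rewrite lsum_minus.
  fold (Hq y d N). unfold Hq in upH.
  assert (l1 := low N ltac:(lia)). assert (u1 := upH N ltac:(lia)).
  assert (f1 := Fb N ltac:(lia)).
  assert (f0 : 0 <= lsum (fun p => Nat.ltb N (snd p)) (fun p => y (snd p)) (st y d (S N)))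
    by (apply lsum_nonneg; intros; left; apply hy).
  destruct (Hq_ge y d hy hunb hlim N) as [g _]. unfold Hq in g.
  unfold hh, Hq, hv in *. apply Rabs_def1; unfold e in *; lra.
Qed.

Lemma Un_cv_ext (u v : nat -> R) l : (forall n, u n = v n) -> Un_cv u l -> Un_cv v l.
Proof.
  intros h hu eps he. destruct (hu eps he) as [N hN]. exists N. intros n hn.
  rewrite <- h. auto.
Qed.

Lemma terms_cv0 (a : nat -> R) l : infinite_sum a l -> Un_cv a 0.
Proof.
  intros h eps he. destruct (h (eps/2) ltac:(lra)) as [N hN]. exists (S N).
  intros n hn. destruct n as [|m]; [lia|].
  assert (h1 := hN (S m) ltac:(lia)). assert (h2 := hN m ltac:(lia)).
  unfold Rdist in *. simpl in h1. rewrite Rminus_0_r.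
  apply Rabs_def2 in h1. apply Rabs_def2 in h2. apply Rabs_def1; lra.
Qed.

Theorem mainTheorem5 (x : nat -> R)
  (hpos : forall n, 0 < x n)
  (hdiv : ~ (exists l, infinite_sum x l))
  (hlim : Un_cv x 0)
  (b : R) (hb : rearr_diff_sums x b) :
  forall c, b <= c -> rearr_diff_sums x c.
Proof.
  intros c hc. destruct hb as [s [[sinj ssurj] hs]].
  set (y := fun n => x (s n)).
  assert (hy : forall n, 0 < y n) by (intros; apply hpos).
  assert (hly : Un_cv y 0).
  { assert (h := CV_minus _ _ _ _ hlim (terms_cv0 _ _ hs)).
    rewrite Rminus_0_r in h. refine (Un_cv_ext _ _ _ _ h). intros n. unfold y. ring. }
  assert (hunb : forall B, exists k, B < PS y k).
  { intros B. apply NNPP. intros hno.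
    assert (hub : forall k, PS y k <= B).
    { intros k. apply Rnot_lt_le. intros hk. apply hno. eauto. }
    destruct (growing_cv (PS y)) as [l hl].
    - intros n. unfold PS. simpl. specialize (hy (S n)). lra.
    - exists B. intros r [i ->]. apply hub.
    - apply hdiv. exists (b + l).
      assert (h := CV_plus _ _ _ _ hs hl).
      refine (Un_cv_ext _ _ _ _ h). intros n. unfold PS. rewrite <- sum_plus.
      apply sum_eq. intros i _. unfold y. ring. }
  set (d := c - b).
  assert (hd : 0 <= d) by (unfold d; lra).
  assert (inv : forall N, chain (st y d N)) by (intros N; apply (st_inv y d hy hunb hly N)).
  assert (ri := rho_inv y d inv).
  exists (fun n => s (rho y d n)). split; [split|].
  - intros m n e. apply sinj in e. rewrite <- (ri m), <- (ri n), e. reflexivity.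
  - intros k. destruct (ssurj k) as [n hn]. exists (rho y d n). rewrite ri. auto.
  - assert (h := CV_plus _ _ _ _ hs (main_lemma y d hy hunb hly hd)).
    replace c with (b + d) by (unfold d; ring).
    refine (Un_cv_ext _ _ _ _ h). intros n. rewrite <- sum_plus.
    apply sum_eq. intros i _. unfold y. ring.
Qed.
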